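(* Assume $\|\hat F'(y)-\hat F'(x)\|_F\le L_{\hat F}\|y-x\|$ for all $x,y\in\mathcal F$ and that $\sigma_{\min}(\hat F'(x)^* )\ge\sqrt\mu$ for all $x\in\mathcal F$, some $\mu>0$. Let $\{x_k\}$ be computed by Scheme 1 in which $x_{k+1}$ is given by $$x_{k+1}=x_k-\eta_k\big(\hat F'(x_k)^*\hat F'(x_k)+\tau_kL_kI_n\big)^{-1}\hat F'(x_k)^*\hat F(x_k),$$ with $\tau_k>0$ and $\eta_k\in(0,2)$. Then for $k\in\mathbb Z_+$: $$\hat f_1(x_{k+1})\le\frac{\tau_k}{2}+\begin{cases}\frac{\hat f_2(x_k)}{2\tau_k}\Big(1-\frac{\eta_k(2-\eta_k)\mu}{L_k\tau_k+\mu}\Big),&\tau_k\ge\frac{\mu}{L_k},\\ \frac{\hat f_2(x_k)(1-\eta_k)^2}{2\tau_k}+\frac{\eta_k(2-\eta_k)L_k\hat f_2(x_k)}{2\mu}-\frac{\eta_k(2-\eta_k)L_k^2\hat f_2(x_k)\tau_k}{2\mu^2(1+\xi)^3}&\text{for some }\xi\in(-1,1],\ \text{if }\tau_k<\frac{\mu}{L_k}.\end{cases}$$ Moreover, if $\eta_k=1$ for all $k$, then $\hat f_1(x_{k+1})\le\frac{\tau_k}{2}+\frac{L_{\hat F}}{\mu}\hat f_2(x_k)$.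
   Context: Let $F:\mathbb R^n\to\mathbb R^m$ be smooth, $\hat F=\frac1{\sqrt m}F$ with Jacobian $\hat F'(x)$ and its transpose $\hat F'(x)^*$; Euclidean norms, $\|\cdot\|_F$ Frobenius norm. $\hat f_1(x)=\|\hat F(x)\|$, $\hat f_2=\hat f_1^2$, $\psi_{x,L,\tau}(y)=\frac\tau2+\frac{\|\hat F(x)+\hat F'(x)(y-x)\|^2}{2\tau}+\frac L2\|y-x\|^2$. $\mathcal F$ closed convex with nonempty interior, $\mathcal L(\hat f_1(x_0))\subseteq\mathcal F$ and the generated sequence stays in $\mathcal F$. Scheme 1 (as used here, with $x_{k+1}$ given by the displayed formula): input $x_0$, $L\in(0,L_{\hat F}]$, $L_0=L$; at iteration $k$ choose $\tau_k$, compute $x_{k+1}$; if $\hat f_1(x_{k+1})>\psi_{x_k,L_k,\tau_k}(x_{k+1})$, set $L_k:=\min\{2L_k,2L_{\hat F}\}$ and recompute; otherwise $L_{k+1}=\max\{L_k/2,L\}$. *)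

(* Defs.v *)
From HB Require Import structures.
From mathcomp Require Import all_boot all_order all_algebra.
From mathcomp Require Import all_classical all_reals all_analysis.
Set Implicit Arguments. Unset Strict Implicit. Unset Printing Implicit Defensive.
Import Order.TTheory GRing.Theory Num.Theory.
Import numFieldNormedType.Exports.
Local Open Scope classical_set_scope.
Local Open Scope ring_scope.

(* Points of R^n are row vectors 'rV[R]_n (the convention of MathComp-Analysis'
   [jacobian]); linear algebra is written with column vectors via transposes. *)

Definition fro (R : realType) (p q : nat) (A : 'M[R]_(p, q)) : R :=
  Num.sqrt (\sum_(i < p) \sum_(j < q) A i j ^+ 2).

Definition sigma_min (R : realType) (p q : nat) (A : 'M[R]_(p, q)) : R :=
  inf [set fro (A *m v) | v in [set v : 'cV[R]_q | fro v = 1]].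

Definition hatF (R : realType) (n m : nat) (F : 'rV[R]_n -> 'rV[R]_m) :
  'rV[R]_n -> 'rV[R]_m := fun x => (Num.sqrt (m%:R))^-1 *: F x.

(* The (standard, m x n) Jacobian matrix G'(x) of G : R^n -> R^m.
   MathComp-Analysis' [jacobian G x] is its transpose (h *m jacobian G x = dG(x) h). *)
Definition Jmx (R : realType) (n m : nat) (G : 'rV[R]_n -> 'rV[R]_m) (x : 'rV[R]_n)
  : 'M[R]_(m, n) := (jacobian G x)^T.

Definition f1 (R : realType) (n m : nat) (G : 'rV[R]_n -> 'rV[R]_m) x : R := fro (G x).
Definition f2 (R : realType) (n m : nat) (G : 'rV[R]_n -> 'rV[R]_m) x : R := (f1 G x) ^+ 2.

Definition psi (R : realType) (n m : nat) (G : 'rV[R]_n -> 'rV[R]_m)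
  (x : 'rV[R]_n) (L tau : R) (y : 'rV[R]_n) : R :=
  tau / 2 + fro ((G x)^T + Jmx G x *m (y - x)^T) ^+ 2 / (2 * tau)
  + L / 2 * fro (y - x) ^+ 2.

Definition trial (R : realType) (n m : nat) (G : 'rV[R]_n -> 'rV[R]_m)
  (x : 'rV[R]_n) (L tau eta : R) : 'rV[R]_n :=
  x - eta *: (invmx ((Jmx G x)^T *m Jmx G x + (tau * L)%:M)
                *m (Jmx G x)^T *m (G x)^T)^T.

Definition Lup (R : realType) (LG : R) (t : R) : R := Num.min (2 * t) (2 * LG).

(* {x_k} computed by Scheme 1 (with the above x_{k+1}), with accepted constants
   Lacc k (the final value of L_k at iteration k), step sizes tau k, eta k.
   L0 k is the value of L_k at the start of iteration k; j is the number of
   failed tests (each followed by a doubling and recomputation). *)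
Definition scheme1 (R : realType) (n m : nat) (G : 'rV[R]_n -> 'rV[R]_m)
  (LG L : R) (x : nat -> 'rV[R]_n) (Lacc tau eta : nat -> R) : Prop :=
  exists L0 : nat -> R,
    L0 0%N = L /\
    forall k : nat,
      (exists j : nat,
         Lacc k = iter j (Lup LG) (L0 k) /\
         (forall i : nat, (i < j)%N ->
            f1 G (trial G (x k) (iter i (Lup LG) (L0 k)) (tau k) (eta k))
            > psi G (x k) (iter i (Lup LG) (L0 k)) (tau k)
                (trial G (x k) (iter i (Lup LG) (L0 k)) (tau k) (eta k)))) /\
      x k.+1 = trial G (x k) (Lacc k) (tau k) (eta k) /\
      f1 G (x k.+1) <= psi G (x k) (Lacc k) (tau k) (x k.+1) /\
      L0 k.+1 = Num.max (Lacc k / 2) L.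

(* Main.v *)
Require Import Defs.
From HB Require Import structures.
From mathcomp Require Import all_boot all_order all_algebra.
From mathcomp Require Import all_classical all_reals all_analysis.
From mathcomp Require Import ring lra.
Import Order.TTheory GRing.Theory Num.Theory.
Import numFieldNormedType.Exports.
Local Open Scope classical_set_scope.
Local Open Scope ring_scope.
Set Implicit Arguments. Unset Strict Implicit. Unset Printing Implicit Defensive.


Section IP.
Variable R : realType.

Definition ip (q : nat) (u v : 'cV[R]_q) : R := \sum_i u i 0 * v i 0.

Lemma ipC q (u v : 'cV[R]_q) : ip u v = ip v u.
Proof. by apply: eq_bigr => i _; rewrite mulrC. Qed.

Lemma ipDl q (u v w : 'cV[R]_q) : ip (u + v) w = ip u w + ip v w.
Proof. by rewrite /ip -big_split; apply: eq_bigr => i _; rewrite !mxE mulrDl. Qed.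

Lemma ipZl q a (u w : 'cV[R]_q) : ip (a *: u) w = a * ip u w.
Proof. by rewrite /ip mulr_sumr; apply: eq_bigr => i _; rewrite !mxE mulrA. Qed.

Lemma ipNl q (u w : 'cV[R]_q) : ip (- u) w = - ip u w.
Proof. by rewrite -scaleN1r ipZl mulN1r. Qed.

Lemma ipBl q (u v w : 'cV[R]_q) : ip (u - v) w = ip u w - ip v w.
Proof. by rewrite ipDl ipNl. Qed.

Lemma ipDr q (u v w : 'cV[R]_q) : ip w (u + v) = ip w u + ip w v.
Proof. by rewrite ipC ipDl !(ipC w). Qed.
Lemma ipZr q a (u w : 'cV[R]_q) : ip w (a *: u) = a * ip w u.
Proof. by rewrite ipC ipZl ipC. Qed.
Lemma ipBr q (u v w : 'cV[R]_q) : ip w (u - v) = ip w u - ip w v.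
Proof. by rewrite ipC ipBl !(ipC w). Qed.

Lemma ip_adj p q (M : 'M[R]_(p, q)) (u : 'cV_p) (v : 'cV_q) :
  ip u (M *m v) = ip (M^T *m u) v.
Proof.
rewrite /ip.
under eq_bigr => i _ do rewrite mxE big_distrr /=.
rewrite exchange_big /=; apply: eq_bigr => j _.
rewrite mxE big_distrl /=; apply: eq_bigr => i _.
by rewrite mxE mulrCA mulrA.
Qed.

Lemma ip_ge0 q (u : 'cV[R]_q) : 0 <= ip u u.
Proof. by apply: sumr_ge0 => i _; rewrite -expr2 sqr_ge0. Qed.

Lemma ip_eq0 q (u : 'cV[R]_q) : ip u u = 0 -> u = 0.
Proof.
move/eqP; rewrite psumr_eq0 => [/allP H|i _]; last by rewrite -expr2 sqr_ge0.
apply/matrixP => i j; rewrite ord1 mxE.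
have := H i (mem_index_enum _); rewrite -expr2 sqrf_eq0 => /eqP //.
Qed.

Lemma fro_col q (u : 'cV[R]_q) : fro u = Num.sqrt (ip u u).
Proof. by rewrite /fro /ip; congr Num.sqrt; apply: eq_bigr => i _; rewrite big_ord1 expr2. Qed.

Lemma fro_tr p q (M : 'M[R]_(p, q)) : fro M^T = fro M.
Proof. rewrite /fro exchange_big /=; congr Num.sqrt; apply: eq_bigr => i _; apply: eq_bigr => j _; by rewrite mxE. Qed.

Lemma fro_col2 q (u : 'cV[R]_q) : fro u ^+ 2 = ip u u.
Proof. by rewrite fro_col sqr_sqrtr // ip_ge0. Qed.

End IP.


Section Key.
Variable R : realType.

Lemma ipAA q m (J : 'M[R]_(m, q)) (c : R) (v : 'cV_q) :
  ip v ((J^T *m J + c%:M) *m v) = ip (J *m v) (J *m v) + c * ip v v.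
Proof.
by rewrite mulmxDl mul_scalar_mx ipDr ipZr -mulmxA ip_adj trmxK.
Qed.

Lemma A_unit q m (J : 'M[R]_(m, q)) (c : R) : 0 < c ->
  (J^T *m J + c%:M) \in unitmx.
Proof.
move=> c0; rewrite -row_free_unit -kermx_eq0; apply/eqP/row_matrixP => i.
rewrite row0; set u := row i _.
have uA : u *m (J^T *m J + c%:M) = 0 by apply/sub_kermxP; rewrite row_sub.
have : (J^T *m J + c%:M) *m u^T = 0.
  have -> : (J^T *m J + c%:M) = (J^T *m J + c%:M)^T.
    by rewrite raddfD /= tr_scalar_mx trmx_mul trmxK.
  by rewrite -trmx_mul uA trmx0.
move=> /(congr1 (ip u^T)); rewrite ipAA.
have -> : ip u^T (0 : 'cV_q) = 0 by rewrite /ip big1 // => j _; rewrite !mxE mulr0.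
move=> H.
have h1 := ip_ge0 (J *m u^T); have h2 := ip_ge0 u^T.
have : ip u^T u^T = 0.
  apply/eqP; rewrite eq_le h2 andbT.
  rewrite -(@ler_pM2l _ c) // mulr0; rewrite -H lerDr //.
by move/ip_eq0 => /(congr1 trmx); rewrite trmxK trmx0.
Qed.

Lemma key q m (J : 'M[R]_(m, q)) (r : 'cV_m) (c mu e : R) :
  0 < c -> 0 < mu -> 0 <= e * (2 - e) ->
  (forall s, mu * ip s s <= ip (J^T *m s) (J^T *m s)) ->
  ip (r - e *: (J *m (invmx (J^T *m J + c%:M) *m J^T *m r)))
     (r - e *: (J *m (invmx (J^T *m J + c%:M) *m J^T *m r)))
   + c * e ^+ 2 * ip (invmx (J^T *m J + c%:M) *m J^T *m r)
                     (invmx (J^T *m J + c%:M) *m J^T *m r)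
   <= ip r r * (1 - e * (2 - e) * mu / (c + mu)).
Proof.
move=> c0 mu0 E0 Hs; set p := invmx _ *m _ *m r.
set A := J^T *m J + c%:M.
have Au := A_unit J c0.
have Ap : A *m p = J^T *m r by rewrite /p mulmxA mulKVmx.
set y := J *m p.
have yy : ip y y + c * ip p p = ip r y.
  by rewrite /y -ipAA -/A Ap ip_adj trmxK ipC.
set s := r - y.
have Bs : (J *m J^T + c%:M) *m s = c *: r.
  have BJ : (J *m J^T + c%:M) *m (J *m p) = J *m (A *m p).
    by rewrite /A !mulmxDl !mulmxDr !mul_scalar_mx scalemxAr !mulmxA.
  rewrite /s /y mulmxBr BJ Ap mulmxDl mul_scalar_mx mulmxA.
  by rewrite addrC addKr.
have sE : s = r - y by [].
clearbody s.
have sB : (mu + c) * ip s s <= c * ip r s.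
  have := Hs s.
  have -> : c * ip r s = ip s ((J *m J^T + c%:M) *m s) by rewrite Bs ipZr ipC.
  move=> H; rewrite mulmxDl mul_scalar_mx ipDr ipZr -mulmxA ip_adj mulrDl.
  by rewrite lerD2r.
have ry : ip r y = ip r r - ip r s by rewrite sE ipBr opprB addrC subrK.
have ex1 : ip (r - e *: y) (r - e *: y) = ip r r - 2 * e * ip r y + e ^+ 2 * ip y y.
  rewrite !(ipBl, ipBr, ipZl, ipZr) (ipC y r); ring.
set k := mu + c.
have k0 : 0 < k by rewrite /k addr_gt0.
have hq := ip_ge0 (c *: r - k *: s).
rewrite !(ipBl, ipBr, ipZl, ipZr) (ipC s r) in hq.
have h2 := ler_wpM2l (ltW k0) sB.
have ka0 : 0 <= c * (c * ip r r - k * ip r s) .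
  rewrite -/k in h2; nra.
have ka : k * ip r s <= c * ip r r by move: ka0; rewrite pmulr_rge0 // subr_ge0.
rewrite ex1.
have -> : ip r r - 2 * e * ip r y + e ^+ 2 * ip y y + c * e ^+ 2 * ip p p
   = ip r r - e * (2 - e) * ip r y.
  have -> : ip r r - 2 * e * ip r y + e ^+ 2 * ip y y + c * e ^+ 2 * ip p p
     = ip r r - 2 * e * ip r y + e ^+ 2 * (ip y y + c * ip p p) by ring.
  rewrite yy; ring.
have : mu * ip r r / k <= ip r r - ip r s.
  rewrite ler_pdivrMr //; rewrite /k in ka *; nra.
move=> H.
have -> : ip r r * (1 - e * (2 - e) * mu / (c + mu)) = ip r r - e * (2 - e) * (mu * ip r r / k).
  rewrite /k (addrC c); field; apply/lt0r_neq0; exact: k0.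
rewrite ry lerD2l lerN2.
by apply: ler_wpM2l.
Qed.

Lemma ip0 q (u : 'cV[R]_q) : ip u 0 = 0.
Proof. by rewrite /ip big1 // => j _; rewrite !mxE mulr0. Qed.

Lemma smin_bound q m (M : 'M[R]_(q, m)) (mu : R) : 0 < mu ->
  Num.sqrt mu <= sigma_min M -> forall s : 'cV_m, mu * ip s s <= ip (M *m s) (M *m s).
Proof.
move=> mu0 H s.
have [->|sn0] := eqVneq s 0; first by rewrite ip0 mulr0 ip_ge0.
have N2p : 0 < ip s s.
  rewrite lt_def ip_ge0 andbT; apply/eqP => /ip_eq0 h; by rewrite h eqxx in sn0.
set N := Num.sqrt (ip s s).
have Np : 0 < N by rewrite sqrtr_gt0.
have NN : N ^+ 2 = ip s s by rewrite sqr_sqrtr // ltW.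
set v := N^-1 *: s.
have fv : fro v = 1.
  rewrite fro_col /v ipZl ipZr mulrA -expr2 exprVn NN mulVf ?sqrtr1 //.
  exact: lt0r_neq0.
have lb : has_lbound [set fro (M *m v) | v in [set v : 'cV[R]_m | fro v = 1]].
  exists 0 => z [w _ <-]; rewrite /fro sqrtr_ge0 //.
have := ge_inf lb (ex_intro2 _ _ v fv erefl).
rewrite -/(sigma_min M) => h.
have := le_trans H h.
rewrite fro_col /v -scalemxAr ipZl ipZr mulrA -expr2 exprVn NN ler_sqrt; last first.
  apply: mulr_ge0; [by rewrite invr_ge0 ltW | exact: ip_ge0].
by rewrite mulrC ler_pdivlMr // => ?.
Qed.
End Key.


Section Main.
Variable R : realType.

Lemma iter_Lup (LF t : R) j : 0 < LF -> 0 < t -> t <= 2 * LF ->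
  0 < iter j (Lup LF) t <= 2 * LF.
Proof.
move=> LF0 t0 tL; elim: j => [|j /andP[IH1 IH2]] /=; first by rewrite t0.
by rewrite /Lup lt_min ge_min lexx orbT andbT !mulr_gt0.
Qed.

Lemma step_bound n m (G : 'rV[R]_n -> 'rV[R]_m) (xk : 'rV_n) (Lk t e mu : R) :
  0 < Lk -> 0 < t -> 0 < mu -> 0 <= e * (2 - e) ->
  Num.sqrt mu <= sigma_min (Jmx G xk)^T ->
  psi G xk Lk t (trial G xk Lk t e) <=
  t / 2 + f2 G xk / (2 * t) * (1 - e * (2 - e) * mu / (Lk * t + mu)).
Proof.
move=> L0 t0 mu0 E0 Hs.
have Hs' := smin_bound mu0 Hs.
set J := Jmx G xk; set r := (G xk)^T.
have c0 : 0 < t * Lk by rewrite mulr_gt0.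
have K := key r c0 mu0 E0 Hs'.
set P := invmx _ *m _ *m r in K.
have dx : (trial G xk Lk t e - xk)^T = - (e *: P).
  rewrite /trial addrC addKr raddfN /= linearZ /= trmxK //.
rewrite /psi dx mulmxN -scalemxAr.
have -> : fro (trial G xk Lk t e - xk) ^+ 2 = e ^+ 2 * ip P P.
  by rewrite -fro_tr dx fro_col2 ipNl -ipC ipNl ipZl ipZr mulrA -expr2 opprK.
rewrite fro_col2 /f2 /f1 -fro_tr fro_col2 -/r -/J.
rewrite -addrA lerD2l (mulrC Lk t).
apply: le_trans (_ : (ip (r - e *: (J *m P)) (r - e *: (J *m P)) + t * Lk * e ^+ 2 * ip P P) / (2 * t) <= _).
  rewrite le_eqVlt; apply/orP; left; apply/eqP; field; exact: lt0r_neq0.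
rewrite [X in _ <= X]mulrAC; apply: (ler_wpM2r _ K); by rewrite invr_ge0 mulr_ge0 // ltW.
Qed.

Lemma case2 (f e t Lk mu : R) : 0 <= f -> 0 < e < 2 -> 0 < t -> 0 < Lk -> 0 < mu ->
  Lk * t < mu ->
  t / 2 + f / (2 * t) * (1 - e * (2 - e) * mu / (Lk * t + mu)) <=
  t / 2 + (f * (1 - e) ^+ 2 / (2 * t) + e * (2 - e) * Lk * f / (2 * mu)
     - e * (2 - e) * Lk ^+ 2 * f * t / (2 * mu ^+ 2 * (1 + 1) ^+ 3)).
Proof.
move=> f0 /andP[e0 e2] t0 L0 mu0 c0.
rewrite lerD2l -subr_ge0.
have cm : Lk * t + mu != 0 by apply/lt0r_neq0; rewrite addr_gt0 // mulr_gt0.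
have -> : f * (1 - e) ^+ 2 / (2 * t) + e * (2 - e) * Lk * f / (2 * mu) -
    e * (2 - e) * Lk ^+ 2 * f * t / (2 * mu ^+ 2 * (1 + 1) ^+ 3) -
    f / (2 * t) * (1 - e * (2 - e) * mu / (Lk * t + mu))
  = f * (e * (2 - e)) * Lk * (Lk * t) * (7 * mu - Lk * t) / (16 * mu ^+ 2 * (Lk * t + mu)).
  by field; rewrite cm /= ?lt0r_neq0.
apply: divr_ge0; last by rewrite mulr_ge0 // ?exprn_ge0 ?addr_ge0 ?mulr_ge0 // ltW.
rewrite !mulr_ge0 // ?ltW ?subr_ge0 ?mulr_gt0 //; lra.
Qed.

Lemma case3 (f t Lk LF mu : R) : 0 <= f -> 0 < t -> 0 < Lk -> 0 < mu -> Lk <= 2 * LF ->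
  t / 2 + f / (2 * t) * (1 - 1 * (2 - 1) * mu / (Lk * t + mu)) <=
  t / 2 + LF / mu * f.
Proof.
move=> f0 t0 L0 mu0 LL.
rewrite lerD2l -subr_ge0.
have cm : Lk * t + mu != 0 by apply/lt0r_neq0; rewrite addr_gt0 // mulr_gt0.
have -> : LF / mu * f - f / (2 * t) * (1 - 1 * (2 - 1) * mu / (Lk * t + mu))
  = f * (2 * LF * (Lk * t + mu) - Lk * mu) / (2 * mu * (Lk * t + mu)).
  by field; rewrite cm /= ?lt0r_neq0.
apply: divr_ge0; last by rewrite !mulr_ge0 // ?addr_ge0 ?mulr_ge0 // ltW.
apply: mulr_ge0 => //; nra.
Qed.
End Main.

Unset Implicit Arguments. Set Strict Implicit.
Theorem theorem5 (R : realType) (n m : nat) (F : 'rV[R]_n -> 'rV[R]_m)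
  (Fset : set 'rV[R]_n) (LF L mu : R)
  (x : nat -> 'rV[R]_n) (Lacc tau eta : nat -> R) :
  (forall y, differentiable F y) ->
  closed Fset -> convex_set Fset -> interior Fset !=set0 ->
  [set y | f1 (hatF F) y <= f1 (hatF F) (x 0%N)] `<=` Fset ->
  (forall k, Fset (x k)) ->
  (forall y z, Fset y -> Fset z ->
     fro (Jmx (hatF F) z - Jmx (hatF F) y) <= LF * fro (z - y)) ->
  0 < mu ->
  (forall y, Fset y -> Num.sqrt mu <= sigma_min (Jmx (hatF F) y)^T) ->
  0 < L -> L <= LF ->
  (forall k, 0 < tau k) ->
  (forall k, 0 < eta k < 2) ->
  scheme1 (hatF F) LF L x Lacc tau eta ->
  (forall k : nat,
     (mu / Lacc k <= tau k ->
        f1 (hatF F) (x k.+1) <= tau k / 2 +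
          f2 (hatF F) (x k) / (2 * tau k)
          * (1 - eta k * (2 - eta k) * mu / (Lacc k * tau k + mu))) /\
     (tau k < mu / Lacc k ->
        exists xi : R, -1 < xi <= 1 /\
          f1 (hatF F) (x k.+1) <= tau k / 2 +
            (f2 (hatF F) (x k) * (1 - eta k) ^+ 2 / (2 * tau k)
             + eta k * (2 - eta k) * Lacc k * f2 (hatF F) (x k) / (2 * mu)
             - eta k * (2 - eta k) * Lacc k ^+ 2 * f2 (hatF F) (x k) * tau k
               / (2 * mu ^+ 2 * (1 + xi) ^+ 3)))) /\
  ((forall k, eta k = 1) ->
     forall k : nat,
       f1 (hatF F) (x k.+1) <= tau k / 2 + LF / mu * f2 (hatF F) (x k)).

Proof.
move=> _ _ _ _ _ Fx _ mu0 Hsig L0 LLF tau0 eta0 [L0f [L00 HS]].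
have LF0 : 0 < LF by apply: lt_le_trans LLF.
have Lacc_b : forall k, 0 < L0f k <= LF -> 0 < Lacc k <= 2 * LF.
  move=> k /andP[a b]; have [[j [-> _]] _] := HS k.
  apply: iter_Lup => //; apply: (le_trans b); rewrite ler_pMl //; lra.
have L0b : forall k, 0 < L0f k <= LF.
  elim => [|k IH]; first by rewrite L00 L0 LLF.
  have [_ [_ [_ ->]]] := HS k.
  have /andP[a b] := Lacc_b k IH.
  rewrite lt_max ge_max L0 orbT LLF !andbT; lra.
have main : forall k, f1 (hatF F) (x k.+1) <= tau k / 2 + f2 (hatF F) (x k) / (2 * tau k)
          * (1 - eta k * (2 - eta k) * mu / (Lacc k * tau k + mu)).
  move=> k; have [_ [xe [fle _]]] := HS k.
  apply: (le_trans fle); rewrite xe.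
  have /andP[a _] := Lacc_b k (L0b k).
  have /andP[e0 e2] := eta0 k.
  apply: step_bound => //; last exact: Hsig.
  apply: mulr_ge0; [exact: ltW | lra].
have f2ge : forall k, 0 <= f2 (hatF F) (x k) by move=> k; rewrite /f2 sqr_ge0.
split.
  move=> k; split; first by move=> _; exact: main.
  move=> hlt; exists 1; split; first by rewrite lexx andbT; lra.
  apply: (le_trans (main k)).
  have /andP[a _] := Lacc_b k (L0b k).
  apply: case2 => //.
  by rewrite mulrC -ltr_pdivlMr.
move=> e1 k; have := main k; rewrite e1 => h; apply: (le_trans h).
have /andP[a b] := Lacc_b k (L0b k).
exact: case3.
Qed.
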